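(* Let $L,D\subseteq\Sigma^\omega$ be such that $D$ has trivial right-congruence. Then $\sim_{L,D}$ is a right-congruence on $\Sigma^*$.
   Context: For $L\subseteq\Sigma^\omega$, the canonical right-congruence $\sim_L$ on $\Sigma^*$ is given by $u\sim_L v$ iff for all $\alpha\in\Sigma^\omega$: $u\alpha\in L\iff v\alpha\in L$. $D$ has trivial right-congruence if $\sim_D$ has exactly one equivalence class. For $w,w'\in\Sigma^*$, $w\sim_{L,D}w'$ iff for all $\alpha\in\Sigma^\omega\setminus D$: $w\alpha\in L\iff w'\alpha\in L$. A right-congruence is an equivalence relation $\sim$ on $\Sigma^*$ such that $u\sim v$ implies $u\sigma\sim v\sigma$ for all $\sigma\in\Sigma$. *)

(* Defs.v *)
From mathcomp Require Import all_boot.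
Set Implicit Arguments. Unset Strict Implicit. Unset Printing Implicit Defensive.

Definition oword (Sigma : Type) := nat -> Sigma.

Definition oconc (Sigma : Type) (u : seq Sigma) (a : oword Sigma) : oword Sigma :=
  fun n => if n < size u then nth (a 0) u n else a (n - size u).

Definition canon_rc (Sigma : Type) (L : oword Sigma -> Prop) (u v : seq Sigma) : Prop :=
  forall a : oword Sigma, L (oconc u a) <-> L (oconc v a).

(* ~_L has exactly one equivalence class (Sigma^* is nonempty, so: all words related) *)
Definition trivial_rc (Sigma : Type) (D : oword Sigma -> Prop) : Prop :=
  forall u v : seq Sigma, canon_rc D u v.

Definition rel_LD (Sigma : Type) (L D : oword Sigma -> Prop) (w w' : seq Sigma) : Prop :=
  forall a : oword Sigma, ~ D a -> (L (oconc w a) <-> L (oconc w' a)).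

Definition right_congruence (Sigma : Type) (R : seq Sigma -> seq Sigma -> Prop) : Prop :=
  [/\ (forall u, R u u),
      (forall u v, R u v -> R v u),
      (forall u v w, R u v -> R v w -> R u w) &
      (forall u v (s : Sigma), R u v -> R (rcons u s) (rcons v s))].

(* Main.v *)
Require Import Defs.
From mathcomp Require Import all_boot.
From Stdlib Require Import FunctionalExtensionality.

Lemma oconc_rcons (Sigma : Type) (u : seq Sigma) s (a : oword Sigma) :
  oconc (rcons u s) a = oconc u (oconc [:: s] a).
Proof.
apply: functional_extensionality => n; rewrite /oconc size_rcons /=.
case: (ltngtP n (size u)) => H.
- rewrite ltnS ltnW // nth_rcons H; exact: set_nth_default.
- have h1 : (n < (size u).+1) = false by apply/negbTE; rewrite -leqNgt.
  have h2 : (n < size u) = false by apply/negbTE; rewrite -leqNgt ltnW.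
  have h3 : (n - size u < 1) = false by apply/negbTE; rewrite -leqNgt subn_gt0.
  by rewrite h1 h3 /= -addn1 subnDA.
- by rewrite H ltnSn subnn nth_rcons ltnn eqxx.
Qed.

Lemma oconc_nil (Sigma : Type) (a : oword Sigma) : oconc [::] a = a.
Proof. by apply: functional_extensionality => n; rewrite /oconc /= subn0. Qed.

Theorem proposition1 (Sigma : finType) (L D : oword Sigma -> Prop) :
  trivial_rc D -> right_congruence (rel_LD L D).
Proof.
move=> tD; split.
- by move=> u a _.
- by move=> u v H a Ha; split; apply H.
- move=> u v w H1 H2 a Ha; split => H.
  + by apply/H2 => //; apply/H1.
  + by apply/H1 => //; apply/H2.
- move=> u v s H a Ha; rewrite !oconc_rcons; apply: H.
  move=> HD; apply: Ha. have := tD [:: s] [::] a. rewrite oconc_nil. by case=> + _; apply.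
Qed.
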